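(* Let $A$ be an $r\times r$ submatrix of a real symmetric $n\times n$ matrix. If one row of $A$ is a tropical multiple of another row of $A$, then $A$ is symmetrically tropically singular. The same holds if one column of $A$ is a tropical multiple of another column of $A$.
   Context: A row (or column) vector $u$ is a tropical multiple of $v$ if there is $c\in\mathbb R$ with $u_k=c+v_k$ for all $k$. For an $r\times r$ submatrix of a real symmetric matrix with row index set $I$ and column index set $J$, each bijection $\rho:I\to J$ gives a monomial $\prod_{i\in I}X_{i,\rho(i)}$ in commuting variables subject to the identification $X_{i,j}=X_{j,i}$, with value $\sum_{i\in I}A_{i,\rho(i)}$; the submatrix is symmetrically tropically singular if the minimum value is attained by at least two distinct monomials (distinct after the identification). *)

(* Defs.v *)
From HB Require Import structures.
From mathcomp Require Import all_boot all_order all_algebra.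
Set Implicit Arguments. Unset Strict Implicit. Unset Printing Implicit Defensive.
Import Order.TTheory GRing.Theory Num.Theory.
Local Open Scope ring_scope.

(* A bijection rho : I -> J is represented by a function f : 'I_n -> 'I_n
   whose restriction to I is injective with image J (values off I are irrelevant). *)
Definition is_bij {n : nat} (I J : {set 'I_n}) (f : 'I_n -> 'I_n) : Prop :=
  {in I &, injective f} /\ [set f i | i in I] = J.

(* Unordered pair {i,j} normalised as an ordered pair (min, max). *)
Definition sympair {n : nat} (i j : 'I_n) : 'I_n * 'I_n :=
  if (i <= j)%N then (i, j) else (j, i).

(* The monomial prod_{i in I} X_{i, f i} with X_{i,j} = X_{j,i}, encoded as its
   exponent vector indexed by unordered pairs. *)
Definition monomial {n : nat} (I : {set 'I_n}) (f : 'I_n -> 'I_n)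
  : {ffun 'I_n * 'I_n -> nat} :=
  [ffun p => #|[set i in I | sympair i (f i) == p]|].

Definition mono_val {R : numDomainType} {n : nat} (M : 'M[R]_n)
  (I : {set 'I_n}) (f : 'I_n -> 'I_n) : R :=
  \sum_(i in I) M i (f i).

Definition sym_trop_singular {R : numDomainType} {n : nat} (M : 'M[R]_n)
  (I J : {set 'I_n}) : Prop :=
  exists f g : 'I_n -> 'I_n,
    [/\ is_bij I J f, is_bij I J g, monomial I f != monomial I g &
        forall h, is_bij I J h ->
          mono_val M I f <= mono_val M I h /\ mono_val M I g <= mono_val M I h].

Definition row_trop_multiple {R : numDomainType} {n : nat} (M : 'M[R]_n)
  (J : {set 'I_n}) (i1 i2 : 'I_n) : Prop :=
  exists c : R, forall j, j \in J -> M i1 j = c + M i2 j.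

Definition col_trop_multiple {R : numDomainType} {n : nat} (M : 'M[R]_n)
  (I : {set 'I_n}) (j1 j2 : 'I_n) : Prop :=
  exists c : R, forall i, i \in I -> M i j1 = c + M i j2.

(* Main.v *)
Require Import Defs.
From HB Require Import structures.
From mathcomp Require Import all_boot all_order all_algebra all_fingroup zify.
Import Order.TTheory GRing.Theory Num.Theory.
Local Open Scope ring_scope.
Set Implicit Arguments. Unset Strict Implicit.

Lemma sympair_eq n (i j k l : 'I_n) : sympair i j = sympair k l ->
  (i = k /\ j = l) \/ (i = l /\ j = k).
Proof.
rewrite /sympair; case: leqP => h1; case: leqP => h2; case=> -> ->; auto.
Qed.

Lemma card_sum n (I : {set 'I_n}) (P : pred 'I_n) :
  #|[set i in I | P i]| = (\sum_(i in I) (P i : nat))%N.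
Proof.
rewrite -sum1_card (eq_bigl (fun i => (i \in I) && P i)); last by move=> i; rewrite inE.
by rewrite big_mkcondr /=; apply: eq_bigr => i _; case: (P i).
Qed.

Section S.
Variables (n : nat) (I J : {set 'I_n}).

Lemma swap_bij (f : 'I_n -> 'I_n) p q : is_bij I J f -> p \in I -> q \in I ->
  is_bij I J (f \o tperm p q).
Proof.
move=> [injf imf] pI qI.
have tI x : x \in I -> tperm p q x \in I by move=> xI; case: tpermP => // ->.
split.
  move=> x y xI yI /= e; apply: (@perm_inj _ (tperm p q)); exact: injf (tI _ xI) (tI _ yI) e.
rewrite -imf; apply/setP => y; apply/imsetP/imsetP => [[x xI ->]|[x xI ->]].
  by exists (tperm p q x) => //; apply: tI.
by exists (tperm p q x); [apply: tI | rewrite /= tpermK].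
Qed.

Lemma split2 (V : nmodType) (F : 'I_n -> V) p q : p \in I -> q \in I -> p != q ->
  \sum_(i in I) F i = F p + (F q + \sum_(i in I | (i != p) && (i != q)) F i).
Proof.
move=> pI qI pq; rewrite (bigD1 p) //= (bigD1 q) /=; last by rewrite qI eq_sym.
by congr (_ + (_ + _)); apply: eq_bigl => i; rewrite andbA.
Qed.

Lemma swap_mono (f : 'I_n -> 'I_n) p q : is_bij I J f -> p \in I -> q \in I -> p != q ->
  monomial I f != monomial I (f \o tperm p q).
Proof.
move=> [injf _] pI qI pq; apply/negP => /eqP E.
have := congr1 (fun m : {ffun 'I_n * 'I_n -> nat} => m (sympair p (f p))) E.
rewrite !ffunE !card_sum (split2 _ pI qI pq) [in RHS](split2 _ pI qI pq) /= tpermL tpermR eqxx.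
have -> : (\sum_(i in I | (i != p) && (i != q)) nat_of_bool (sympair i (f (tperm p q i)) == sympair p (f p)) =
   \sum_(i in I | (i != p) && (i != q)) nat_of_bool (sympair i (f i) == sympair p (f p)))%N.
  by apply: eq_bigr => i /andP [_ /andP [ip iq]]; rewrite tpermD // eq_sym.
have fpq : f p != f q by apply/eqP => /injf; move/(_ pI qI)/eqP; rewrite (negbTE pq).
have -> : (sympair p (f q) == sympair p (f p)) = false.
  apply/eqP => /sympair_eq [[_ e]|[e1 e2]]; first by move: fpq; rewrite e eqxx.
  by move: fpq; rewrite e2 -e1 eqxx.
have -> : (sympair q (f p) == sympair p (f p)) = false.
  apply/eqP => /sympair_eq [[e _]|[e1 e2]]; first by move: pq; rewrite e eqxx.
  by move: pq; rewrite -e2 e1 eqxx.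
move=> /=; set S := (\sum_(i in I | _) _)%N; set b := nat_of_bool _; lia.
Qed.
End S.

Lemma swap_val (R : realFieldType) n (I : {set 'I_n}) (M : 'M[R]_n) (f : 'I_n -> 'I_n) p q :
  p \in I -> q \in I -> p != q ->
  M p (f q) + M q (f p) = M p (f p) + M q (f q) ->
  mono_val M I (f \o tperm p q) = mono_val M I f.
Proof.
move=> pI qI pq e; rewrite /mono_val (split2 _ pI qI pq) [RHS](split2 _ pI qI pq) /= tpermL tpermR.
rewrite addrA e -addrA; congr (_ + (_ + _)).
by apply: eq_bigr => i /andP [_ /andP [ip iq]]; rewrite tpermD // eq_sym.
Qed.

Lemma core (R : realFieldType) n (I J : {set 'I_n}) (M : 'M[R]_n) (f : 'I_n -> 'I_n) p q :
  is_bij I J f -> (forall h, is_bij I J h -> mono_val M I f <= mono_val M I h) ->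
  p \in I -> q \in I -> p != q ->
  M p (f q) + M q (f p) = M p (f p) + M q (f q) -> sym_trop_singular M I J.
Proof.
move=> bf opt pI qI pq e; exists f, (f \o tperm p q); split.
- exact: bf.
- exact: swap_bij.
- exact: swap_mono bf pI qI pq.
- by move=> h /opt; rewrite swap_val.
Qed.

Lemma exists_bij n (I J : {set 'I_n}) (x0 : 'I_n) : #|I| = #|J| -> exists f, is_bij I J f.
Proof.
move=> cIJ; exists (fun x => nth x0 (enum J) (index x (enum I))); split.
  move=> x y xI yI /= e; rewrite -(nth_index x0 (x:=x) (s:=enum I)) ?mem_enum //.
  rewrite -(nth_index x0 (x:=y) (s:=enum I)) ?mem_enum //; congr nth.
  move/eqP: e; rewrite nth_uniq ?enum_uniq //; first by move/eqP.
    by rewrite -cardE -cIJ cardE index_mem mem_enum.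
  by rewrite -cardE -cIJ cardE index_mem mem_enum.
apply/setP => y; apply/imsetP/idP => [[x xI ->]|yJ].
  by rewrite -mem_enum mem_nth // -cardE -cIJ cardE index_mem mem_enum.
have hy : (index y (enum J) < size (enum I))%N by rewrite -cardE cIJ cardE index_mem mem_enum.
exists (nth x0 (enum I) (index y (enum J))); first by rewrite -mem_enum mem_nth.
by rewrite index_uniq ?enum_uniq // nth_index // mem_enum.
Qed.

Lemma exists_opt (R : realFieldType) n (I J : {set 'I_n}) (M : 'M[R]_n) (x0 : 'I_n) :
  #|I| = #|J| -> exists f, is_bij I J f /\
    (forall h, is_bij I J h -> mono_val M I f <= mono_val M I h).
Proof.
move=> /(exists_bij x0) [f0 bf0].
pose Pb (h : {ffun 'I_n -> 'I_n}) : bool :=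
  [forall x in I, forall y in I, (h x == h y) ==> (x == y)] && ([set h i | i in I] == J).
have PbP (h : 'I_n -> 'I_n) : is_bij I J h <-> Pb (finfun h).
  split.
    move=> [ih im]; apply/andP; split.
      apply/forall_inP => x xI; apply/forall_inP => y yI; rewrite !ffunE.
      by apply/implyP => /eqP /ih -> .
    by rewrite -im; apply/eqP/setP => z; apply/imsetP/imsetP => [[x xI ->]|[x xI ->]];
      exists x => //; rewrite ffunE.
  move=> /andP [/forall_inP ih /eqP im]; split.
    move=> x y xI yI e; have := forall_inP (ih x xI) y yI; rewrite !ffunE e eqxx /=.
    by move/eqP.
  by rewrite -im; apply/setP => z; apply/imsetP/imsetP => [[x xI ->]|[x xI ->]];
      exists x => //; rewrite ffunE.
have mv (h : 'I_n -> 'I_n) : mono_val M I (finfun h) = mono_val M I h.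
  by apply: eq_bigr => i _; rewrite ffunE.
have P0 : Pb (finfun f0) by apply/PbP.
case: (arg_minP (fun h : {ffun 'I_n -> 'I_n} => mono_val M I h) P0) => g Pg gmin.
exists g; split.
  have := (proj2 (PbP g)); rewrite (_ : finfun g = g); first by apply.
  by apply/ffunP => x; rewrite ffunE.
move=> h /PbP /gmin; by rewrite mv.
Qed.

Unset Implicit Arguments.
Theorem proposition4 (R : realFieldType) (n r : nat) (M : 'M[R]_n)
  (I J : {set 'I_n}) :
  M^T = M -> #|I| = r -> #|J| = r ->
  ((exists i1 i2, [/\ i1 \in I, i2 \in I, i1 != i2 & row_trop_multiple M J i1 i2]) \/
   (exists j1 j2, [/\ j1 \in J, j2 \in J, j1 != j2 & col_trop_multiple M I j1 j2])) ->
  sym_trop_singular M I J.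
Proof.
move=> _ cI cJ [[i1 [i2 [i1I i2I ne [c hc]]]]|[j1 [j2 [j1J j2J ne [c hc]]]]].
- have [f [bf opt]] := exists_opt M i1 (etrans cI (esym cJ)).
  have fJ x : x \in I -> f x \in J by move=> xI; rewrite -(proj2 bf); apply: imset_f.
  apply: (core bf opt i1I i2I ne).
  rewrite (hc _ (fJ _ i2I)) (hc _ (fJ _ i1I)).
  by rewrite -!addrA; congr (_ + _); rewrite addrC.
- have [f [bf opt]] := exists_opt M j1 (etrans cI (esym cJ)).
  have /imsetP [p pI ep] : j1 \in [set f i | i in I] by rewrite (proj2 bf).
  have /imsetP [q qI eqq] : j2 \in [set f i | i in I] by rewrite (proj2 bf).
  have pq : p != q by apply: contra ne => /eqP epq; rewrite ep eqq epq.
  apply: (core bf opt pI qI pq).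
  rewrite -ep -eqq (hc _ pI) (hc _ qI).
  by rewrite addrCA addrA.
Qed.
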